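(* Let $D=\tau_z h$ where $h$ is a Hermitian $2N\times 2N$ matrix and $\tau_z=\mathrm{diag}(\mathbb{1}_N,-\mathbb{1}_N)$, and assume $D$ is diagonalizable with all eigenvalues real. Let $\omega_0>0$ be such that no eigenvalue of $D$ equals $\pm\omega_0$, and let $W_+\subset\mathbb{C}^{2N}$ be the span of the eigenvectors of $D$ with eigenvalues $\omega>\omega_0$, of dimension $M$. Then the eigenvectors spanning $W_+$ may be chosen mutually orthogonal with respect to the symplectic form $\langle x|\tau_z|y\rangle$ and each with nonzero symplectic norm; let $R_+$ (resp. $R_-$) be the number of them with positive (resp. negative) symplectic norm $\langle w|\tau_z|w\rangle$, so $R_++R_-=M$. Then $W_+$ can be uniquely decomposed as a direct sum $W_+=W_{++}\oplus W_{+-}$, where $W_{++}$ and $W_{+-}$ are subspaces of dimensions $R_+$ and $R_-$ respectively, such that for all nonzero $w_+\in W_{++}$ and $w_-\in W_{+-}$: $$\operatorname{sgn}\langle w_\sigma|\tau_z|w_\sigma\rangle=\sigma\ (\sigma=\pm),\qquad \langle w_+|\tau_z|w_-\rangle=0,\qquad \langle w_+|w_-\rangle=0.$$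
   Context: $\langle\cdot|\cdot\rangle$ denotes the standard Hermitian inner product on $\mathbb{C}^{2N}$. In the physical setting, $h=h(\vec k)$ is the Bogoliubov–de Gennes matrix of a quadratic bosonic Hamiltonian at momentum $\vec k$ and $D$ is its dynamical matrix. *)

(* Defs.v *)
(* Vectors of C^(2N) are stored as row vectors 'rV[C]_(N+N)
   (so that MathComp's row-space theory, mxalgebra, can be used for subspaces);
   a matrix A acts on a vector v as on a column vector: A *m v^T. *)
From HB Require Import structures.
From mathcomp Require Import all_boot all_order all_algebra.
Set Implicit Arguments. Unset Strict Implicit. Unset Printing Implicit Defensive.
Import Order.TTheory GRing.Theory Num.Theory.
Local Open Scope ring_scope.

Section Defs.
Variable C : numClosedFieldType.
Variable N : nat.
Local Notation n := (N + N)%N.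

Definition tauz : 'M[C]_n := block_mx 1%:M 0 0 (- 1%:M).

Definition hip (x y : 'rV[C]_n) : C := \sum_(i < n) (x 0 i)^* * y 0 i.

Definition sympl (x y : 'rV[C]_n) : C := hip x (tauz *m y^T)^T.

Definition hermitian_mx (h : 'M[C]_n) : Prop := forall i j, h j i = (h i j)^*.

Definition eigvec (A : 'M[C]_n) (w : C) (v : 'rV[C]_n) : Prop :=
  v != 0 /\ A *m v^T = w *: v^T.

Definition is_span_of (P : 'rV[C]_n -> Prop) (W : 'M[C]_n) : Prop :=
  (forall v, P v -> (v <= W)%MS) /\
  (forall U : 'M[C]_n, (forall v, P v -> (v <= U)%MS) -> (W <= U)%MS).

Definition good_eigenbasis (A : 'M[C]_n) (w0 : C) (W : 'M[C]_n) (M : nat)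
    (b : 'I_M -> 'rV[C]_n) : Prop :=
  [/\ forall i, exists2 w, w0 < w & eigvec A w (b i),
      (\matrix_(i < M) b i == W)%MS,
      forall i j, i != j -> sympl (b i) (b j) = 0
    & forall i, sympl (b i) (b i) != 0].

Definition good_decomp (W Wpp Wpm : 'M[C]_n) (Rp Rm : nat) : Prop :=
  [/\ (Wpp + Wpm == W)%MS, mxdirect (Wpp + Wpm),
      \rank Wpp = Rp & \rank Wpm = Rm] /\
  [/\ forall w, (w <= Wpp)%MS -> w != 0 -> 0 < sympl w w,
      forall w, (w <= Wpm)%MS -> w != 0 -> sympl w w < 0
    & forall wp wm, (wp <= Wpp)%MS -> (wm <= Wpm)%MS -> wp != 0 -> wm != 0 ->
        sympl wp wm = 0 /\ hip wp wm = 0].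

End Defs.

(* Main.v *)
Require Import Defs.
From Stdlib Require Import Classical.
From HB Require Import structures.
From mathcomp Require Import all_boot all_order all_algebra zify ring.
Set Implicit Arguments. Unset Strict Implicit. Unset Printing Implicit Defensive.
Import Order.TTheory GRing.Theory Num.Theory.
Local Open Scope ring_scope.

Section Basics.
Variable C : numClosedFieldType.
Variable N : nat.
Local Notation n := (N + N)%N.
Local Notation cj A := (map_mx Num.Def.conjC A).
Local Notation tz := (tauz C N).
Implicit Types x y z : 'rV[C]_n.

Definition fm (M : 'M[C]_n) x y := (cj x *m M *m y^T) 0 0.

Lemma hipE x y : hip x y = fm 1 x y.
Proof. by rewrite /fm mulmx1 /hip mxE; apply: eq_bigr => i _; rewrite !mxE. Qed.

Lemma symplE x y : sympl x y = fm tz x y.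
Proof. by rewrite /sympl hipE /fm mulmx1 trmxK mulmxA. Qed.

Lemma fm_conj M x y : (fm M x y)^* = fm ((cj M)^T) y x.
Proof.
have -> : forall A : 'M[C]_1, (A 0 0)^* = (cj A)^T 0 0 by move=> A; rewrite !mxE.
rewrite !map_mxM map_mxCK map_trmx !trmx_mul /fm map_trmx trmxK.
by rewrite mulmxA map_trmx.
Qed.

Lemma tauz_tr : tz^T = tz.
Proof. by rewrite /tauz tr_block_mx !trmx0 trmx1 raddfN /= trmx1. Qed.

Lemma tauz_cj : cj tz = tz.
Proof. by rewrite /tauz map_block_mx map_mx1 map_mx0 map_mxN map_mx1. Qed.

Lemma tauz2 : tz *m tz = 1%:M.
Proof.
rewrite /tauz mulmx_block !mulmx0 !mul0mx !mulmx1 !addr0 !add0r mulmxN mulmx1 opprK.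
by rewrite -scalar_mx_block.
Qed.

Definition Hm (M : 'M[C]_n) := (cj M)^T = M.

Lemma Hm1 : Hm 1%:M.
Proof. by rewrite /Hm map_mx1 trmx1. Qed.

Lemma Hmtz : Hm tz.
Proof. by rewrite /Hm tauz_cj tauz_tr. Qed.

Lemma fm_sym M x y : Hm M -> fm M y x = (fm M x y)^*.
Proof. by move=> HM; rewrite fm_conj HM. Qed.

Lemma fmDr M x y z : fm M x (y + z) = fm M x y + fm M x z.
Proof. by rewrite /fm linearD /= mulmxDr mxE. Qed.
Lemma fmBr M x y z : fm M x (y - z) = fm M x y - fm M x z.
Proof. by rewrite /fm linearB /= mulmxBr !mxE. Qed.
Lemma fmZr M x a y : fm M x (a *: y) = a * fm M x y.
Proof. by rewrite /fm linearZ /= -scalemxAr mxE. Qed.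
Lemma fm0r M x : fm M x 0 = 0.
Proof. by rewrite /fm trmx0 mulmx0 mxE. Qed.
Lemma fmDl M x y z : fm M (y + z) x = fm M y x + fm M z x.
Proof. by rewrite /fm map_mxD !mulmxDl mxE. Qed.
Lemma fmBl M x y z : fm M (y - z) x = fm M y x - fm M z x.
Proof. by rewrite /fm map_mxB !mulmxBl !mxE. Qed.
Lemma fmZl M x a y : fm M (a *: y) x = a^* * fm M y x.
Proof. by rewrite /fm map_mxZ -!scalemxAl mxE. Qed.
Lemma fm0l M x : fm M 0 x = 0.
Proof. by rewrite /fm map_mx0 !mul0mx mxE. Qed.
Lemma fm_sumr M x (I : Type) (r : seq I) (P : pred I) (F : I -> 'rV[C]_n) :
  fm M x (\sum_(i <- r | P i) F i) = \sum_(i <- r | P i) fm M x (F i).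
Proof. exact: (big_morph _ (fmDr M x) (fm0r M x)). Qed.
Lemma fm_suml M x (I : Type) (r : seq I) (P : pred I) (F : I -> 'rV[C]_n) :
  fm M (\sum_(i <- r | P i) F i) x = \sum_(i <- r | P i) fm M (F i) x.
Proof. exact: (big_morph _ (fun y z => fmDl M x y z) (fm0l M x)). Qed.

Lemma fm1_ge0 x : 0 <= fm 1%:M x x.
Proof.
rewrite -hipE /hip; apply: sumr_ge0 => i _; rewrite mulrC; exact: mul_conjC_ge0.
Qed.

Lemma fm1_eq0 x : fm 1%:M x x = 0 -> x = 0.
Proof.
rewrite -hipE /hip => H; apply/rowP => i; rewrite mxE.
have H' : \sum_(j < n) x 0 j * (x 0 j)^* = 0.
  by rewrite -[RHS]H; apply: eq_bigr => j _; rewrite mulrC.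
have := @psumr_eq0P _ _ xpredT (fun j => x 0 j * (x 0 j)^*) (fun j _ => mul_conjC_ge0 (x 0 j)) H' i isT.
by move/eqP; rewrite mul_conjC_eq0 => /eqP.
Qed.

Lemma fm1_gt0 x : x != 0 -> 0 < fm 1%:M x x.
Proof.
move=> nx; rewrite lt_def fm1_ge0 andbT; apply/eqP => /fm1_eq0 H.
by rewrite H eqxx in nx.
Qed.

Lemma fm_real M x : Hm M -> fm M x x \is Num.real.
Proof. by move=> HM; rewrite CrealE -fm_sym. Qed.

Lemma fmtz_nondeg x : (forall y, fm tz x y = 0) -> x = 0.
Proof.
move=> H; apply: fm1_eq0; rewrite -(H (x *m tz)) /fm trmx_mul tauz_tr.
by rewrite !mulmxA -(mulmxA (cj x) tz tz) tauz2 mulmx1.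
Qed.

Lemma fmNM M x y : fm (- M) x y = - fm M x y.
Proof. by rewrite /fm mulmxN mulNmx mxE. Qed.

Lemma mx11_eq0 (A : 'M[C]_1) : (A == 0) = (A 0 0 == 0).
Proof.
apply/eqP/eqP => [->|H]; first by rewrite mxE.
by apply/matrixP => i j; rewrite !ord1 H mxE.
Qed.

Lemma fm_ker M x y : (y <= kermx (cj x *m M)^T)%MS = (fm M x y == 0).
Proof.
rewrite sub_kermx mx11_eq0 /fm.
have -> : forall A : 'M[C]_1, A 0 0 = A^T 0 0 by move=> A; rewrite mxE.
by rewrite trmx_mul trmxK.
Qed.

Lemma cap0 m1 m2 (A : 'M[C]_(m1, n)) (B : 'M[C]_(m2, n)) :
  (forall z : 'rV_n, (z <= A)%MS -> (z <= B)%MS -> z = 0) -> (A :&: B = 0)%MS.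
Proof.
move=> H; apply/row_matrixP => i; rewrite row0; apply: H.
  exact: submx_trans (row_sub _ _) (capmxSl _ _).
exact: submx_trans (row_sub _ _) (capmxSr _ _).
Qed.

Lemma mx_rows0 m (A : 'M[C]_(m, n)) :
  (forall z : 'rV_n, (z <= A)%MS -> z = 0) -> A = 0.
Proof. by move=> H; apply/row_matrixP => i; rewrite row0; apply: H; apply: row_sub. Qed.

Lemma free_of_inj m (A : 'M[C]_m) :
  (forall u : 'rV_m, u *m A = 0 -> u = 0) -> A \in unitmx.
Proof.
move=> H; rewrite -row_free_unit -kermx_eq0; apply/eqP/row_matrixP => i.
by rewrite row0; apply: H; apply/eqP; rewrite -sub_kermx row_sub.
Qed.

Definition kerM M x : 'M[C]_n := kermx (cj x *m M)^T.

Lemma decomp_in M (V : 'M[C]_n) x y : (x <= V)%MS -> fm M x x != 0 -> (y <= V)%MS ->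
  (y - (fm M x y / fm M x x) *: x <= V :&: kerM M x)%MS.
Proof.
move=> xV nx yV; rewrite sub_capmx; apply/andP; split.
  by rewrite -scaleNr addmx_sub // scalemx_sub.
by rewrite /kerM fm_ker fmBr fmZr divfK // subrr.
Qed.

Lemma decomp_sub M (V : 'M[C]_n) x : (x <= V)%MS -> fm M x x != 0 ->
  (V <= (V :&: kerM M x) + x)%MS.
Proof.
move=> xV nx; apply/row_subP => i.
have yV := row_sub i V.
rewrite -[row i V](subrK ((fm M x (row i V) / fm M x x) *: x)).
apply: addmx_sub.
  exact: submx_trans (decomp_in xV nx yV) (addsmxSl _ _).
by apply: scalemx_sub; apply: addsmxSr.
Qed.

Lemma decomp_rank M (V : 'M[C]_n) x : (x <= V)%MS -> fm M x x != 0 ->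
  (\rank (V :&: kerM M x)).+1 = \rank V.
Proof.
move=> xV nx.
have h1 := mxrankS (decomp_sub xV nx).
have h2 := (mxrank_adds_leqif (V :&: kerM M x)%MS x).1.
have h3 := rank_leq_row x.
have h4 : (\rank (V :&: kerM M x) < \rank V)%N.
  apply: rank_ltmx; rewrite ltmxE capmxSl /=; apply/negP => H.
  have := submx_trans xV (submx_trans H (capmxSr _ _)).
  by rewrite /kerM fm_ker (negbTE nx).
lia.
Qed.
End Basics.

Section Eig.
Variable C : numClosedFieldType.
Variable N : nat.
Local Notation n := (N + N)%N.
Local Notation cj A := (map_mx Num.Def.conjC A).
Local Notation tz := (tauz C N).
Implicit Types x y z : 'rV[C]_n.
Variables (h D : 'M[C]_n).
Hypothesis hH : Hm h.
Hypothesis hD : tz *m D = h.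

Lemma eig_fm x y b : D *m y^T = b *: y^T -> fm h x y = b * fm tz x y.
Proof.
by move=> Hy; rewrite /fm -hD mulmxA -(mulmxA _ D) Hy -scalemxAr mxE.
Qed.

Lemma eig_orth x y a b : a \is Num.real -> D *m x^T = a *: x^T ->
  D *m y^T = b *: y^T -> a != b -> fm tz x y = 0.
Proof.
move=> ar Hx Hy nab.
have e1 := eig_fm x Hy.
have e2 := eig_fm y Hx.
have e3 : fm h x y = a * fm tz x y.
  by rewrite (fm_sym y x hH) e2 rmorphM /= (conj_Creal ar) -(fm_sym y x (Hmtz C N)).
have : (a - b) * fm tz x y = 0 by rewrite mulrBl -e3 -e1 subrr.
by move/eqP; rewrite mulf_eq0 subr_eq0 (negbTE nab) /= => /eqP.
Qed.

Lemma char_poly_tr (A : 'M[C]_n) : char_poly A^T = char_poly A.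
Proof.
rewrite /char_poly -det_tr; congr (\det _); apply/matrixP => i j.
by rewrite !mxE eq_sym.
Qed.

Lemma eig_tr (A : 'M[C]_n) a : eigenvalue A^T a -> eigenvalue A a.
Proof. by rewrite !eigenvalue_root_char char_poly_tr. Qed.

Lemma diag_tr (A : 'M[C]_n) : diagonalizable A -> diagonalizable A^T.
Proof.
case=> P Pu /(diagonalizable_forLR Pu) [d ->].
have Qu : (invmx P)^T \in unitmx by rewrite unitmx_tr unitmx_inv.
exists (invmx P)^T => //; apply/(diagonalizable_forLR Qu); exists d.
rewrite !mxpoly.conjVmx // trmx_inv invmxK !trmx_mul tr_diag_mx trmx_inv.
by rewrite mulmxA.
Qed.

End Eig.

Section Main.
Variable C : numClosedFieldType.
Variable N : nat.
Local Notation n := (N + N)%N.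
Local Notation cj A := (map_mx Num.Def.conjC A).
Local Notation tz := (tauz C N).
Implicit Types x y z : 'rV[C]_n.
Variables (h D : 'M[C]_n).
Hypothesis hH : Hm h.
Hypothesis hD : tz *m D = h.
Variable w0 : C.
Hypothesis w0pos : 0 < w0.
Let HT := Hmtz C N.

Definition Eig v := exists2 w, w0 < w & eigvec D w v.

Lemma real_gt a : w0 < a -> a \is Num.real.
Proof. by move=> ha; apply: gtr0_real; apply: lt_trans ha. Qed.

Let eorth := eig_orth hH hD.

Lemma ND (W : 'M[C]_n) :
  diagonalizable D -> (forall a, eigenvalue D a -> a \is Num.real) ->
  is_span_of Eig W ->
  forall x, (x <= W)%MS -> (forall y, (y <= W)%MS -> fm tz x y = 0) -> x = 0.
Proof.
move=> Ddiag Dreal [sp1 sp2] x xW Hx; apply: fmtz_nondeg => y.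
suff: (1%:M <= kerM tz x)%MS.
  by move/(submx_trans (submx1 y)); rewrite /kerM fm_ker => /eqP.
have [rs _ rsP] := (@diagonalizablePeigen _ _ D^T).1 (diag_tr Ddiag).
rewrite -rsP.
elim: rs {rsP} => [|r rs IH]; first by rewrite big_nil sub0mx.
rewrite big_cons addsmx_sub IH andbT.
apply/row_subP => i; set y' := row i _.
have Hy : y' *m D^T = r *: y' by apply/eigenspaceP; apply: row_sub.
have HyT : D *m y'^T = r *: y'^T by rewrite -[D]trmxK -trmx_mul Hy linearZ.
case: (eqVneq y' 0) => [->|ny]; first by rewrite sub0mx.
have rreal : r \is Num.real.
  by apply: Dreal; apply: eig_tr; apply/eigenvalueP; exists y'.
rewrite /kerM fm_ker; case: (boolP (w0 < r)) => hr.
  by rewrite Hx //; apply: sp1; exists r => //; split.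
have : (W <= kerM tz y')%MS.
  apply: sp2 => v [a ha [nv Hv]]; rewrite /kerM fm_ker; apply/eqP.
  apply: (eorth rreal HyT Hv); apply/eqP => e; by rewrite e ha in hr.
move/(submx_trans xW); rewrite /kerM fm_ker => /eqP H.
by rewrite (fm_sym y' x HT) H conjC0.
Qed.


Lemma EB k : forall V : 'M[C]_n, \rank V = k ->
  (forall x, (x <= V)%MS -> (forall y, (y <= V)%MS -> fm tz x y = 0) -> x = 0) ->
  (forall U : 'M[C]_n, (forall v, (v <= V)%MS -> Eig v -> (v <= U)%MS) -> (V <= U)%MS) ->
  exists b : 'I_k -> 'rV[C]_n, [/\ forall i, Eig (b i), (\matrix_(i < k) b i == V)%MS,
     forall i j, i != j -> fm tz (b i) (b j) = 0 & forall i, fm tz (b i) (b i) != 0].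
Proof.
elim: k => [|k IH] V rV nd sp.
  exists (fun _ => 0); split; try by case.
  move/eqP: rV; rewrite mxrank_eq0 => /eqP ->.
  by apply/andP; split; [apply/row_subP => -[] | rewrite sub0mx].
have [x [xV Ex nx]] : exists x, [/\ (x <= V)%MS, Eig x & fm tz x x != 0].
  apply: NNPP => Hn.
  have H0 : forall x, (x <= V)%MS -> Eig x -> fm tz x x = 0.
    move=> x xV Ex; apply/eqP; case: (eqVneq (fm tz x x) 0) => // nz.
    by case: Hn; exists x.
  have H1 : forall a x, w0 < a -> (x <= V)%MS -> D *m x^T = a *: x^T ->
      fm tz x x = 0.
    move=> a x ha xV Hx; case: (eqVneq x 0) => [->|nx]; first by rewrite fm0l.
    by apply: H0 => //; exists a.
  have H2 : forall x y, (x <= V)%MS -> (y <= V)%MS -> Eig x -> Eig y ->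
      fm tz x y = 0.
    move=> x y xV yV [a ha [_ Hx]] [b hb [_ Hy]].
    case: (eqVneq a b) => [eab|nab]; last exact: (eorth (real_gt ha) Hx Hy nab).
    subst b.
    have e1 : fm tz (x + y) (x + y) = 0.
      apply: (H1 a) => //; first by apply: addmx_sub.
      by rewrite linearD /= mulmxDr Hx Hy scalerDr.
    have e2 : fm tz (x + 'i *: y) (x + 'i *: y) = 0.
      apply: (H1 a) => //; first by apply: addmx_sub => //; apply: scalemx_sub.
      by rewrite linearD linearZ /= mulmxDr -scalemxAr Hx Hy scalerDr !scalerA mulrC.
    have ex := H1 a x ha xV Hx.
    have ey := H1 a y ha yV Hy.
    have sy := fm_sym x y HT.
    move: e1 e2; rewrite !fmDl !fmDr !fmZl !fmZr ex ey sy conjCi => e1 e2.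
    set s := fm tz x y in e1 e2 *.
    have e1' : s + s^* = 0 by rewrite -e1; ring.
    have e2' : 'i * s - 'i * s^* = 0 by rewrite -e2; ring.
    have : 'i * (s *+ 2) = 0.
      have -> : 'i * (s *+ 2) = ('i * s - 'i * s^*) + 'i * (s + s^*) by ring.
      by rewrite e1' e2' mulr0 addr0.
    move/eqP; rewrite mulf_eq0 (negbTE (neq0Ci C)) /= mulrn_eq0 /=.
    by move/eqP.
  have H3a : forall x, (x <= V)%MS -> Eig x -> forall y, (y <= V)%MS -> fm tz x y = 0.
    move=> x xV Ex y yV; apply/eqP; rewrite -fm_ker; apply: submx_trans yV _.
    by apply: sp => v vV Ev; rewrite fm_ker; apply/eqP; apply: H2.
  have H3 : forall z, (z <= V)%MS -> forall y, (y <= V)%MS -> fm tz z y = 0.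
    move=> z zV y yV; apply/eqP; rewrite -fm_ker; apply: submx_trans yV _.
    apply: sp => v vV Ev; rewrite fm_ker (fm_sym v z HT) (H3a v vV Ev z zV).
    by rewrite conjC0.
  have V0 : V = 0 := mx_rows0 (fun z zV => nd z zV (H3 z zV)).
  by move: rV; rewrite V0 mxrank0.
have [a ha [nx0 Hx]] := Ex.
set V' := (V :&: kerM tz x)%MS.
have rV' : \rank V' = k by have := decomp_rank xV nx; rewrite rV => -[].
have V'V : (V' <= V)%MS := capmxSl _ _.
have V'K : forall z, (z <= V')%MS -> fm tz x z = 0.
  move=> z zV'; apply/eqP; rewrite -fm_ker.
  exact: submx_trans zV' (capmxSr _ _).
have nd' : forall z, (z <= V')%MS -> (forall y, (y <= V')%MS -> fm tz z y = 0) -> z = 0.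
  move=> z zV' Hz; apply: nd; first exact: submx_trans zV' V'V.
  move=> y yV; have := Hz _ (decomp_in xV nx yV); rewrite fmBr fmZr.
  have -> : fm tz z x = 0 by rewrite (fm_sym x z HT) V'K // conjC0.
  by rewrite mulr0 subr0.
have sp' : forall U : 'M[C]_n, (forall v, (v <= V')%MS -> Eig v -> (v <= U)%MS) ->
    (V' <= U)%MS.
  move=> U HU.
  have VU2 : (V <= (U :&: V') + x)%MS.
    apply: sp => v vV [b hb [nv Hv]].
    case: (eqVneq a b) => [eab|nab].
      subst b.
      rewrite -[v](subrK ((fm tz x v / fm tz x x) *: x)).
      apply: addmx_sub; last by apply: scalemx_sub; apply: addsmxSr.
      have v'V' := decomp_in xV nx vV.
      set v' := v - _ in v'V' *.
      apply: submx_trans (addsmxSl _ _); rewrite sub_capmx v'V' andbT.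
      case: (eqVneq v' 0) => [->|nv']; first by rewrite sub0mx.
      apply: HU => //; exists a => //; split => //.
      by rewrite /v' linearB linearZ /= mulmxBr -scalemxAr Hx Hv scalerBr !scalerA mulrC.
    have e := eorth (real_gt ha) Hx Hv nab.
    have vV' : (v <= V')%MS by rewrite sub_capmx vV /kerM fm_ker e eqxx.
    apply: submx_trans (addsmxSl _ _); rewrite sub_capmx vV' andbT.
    by apply: HU => //; exists b => //; split.
  apply/row_subP => i; set z := row i V'.
  have zV' : (z <= V')%MS := row_sub i V'.
  have := submx_trans (submx_trans zV' V'V) VU2.
  case/sub_addsmxP => -[u1 u2] /= ez.
  have z1s : (u1 *m (U :&: V') <= U :&: V')%MS := submxMl _ _.
  have ez' : z = u1 *m (U :&: V')%MS + (u2 0 0) *: x.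
    by rewrite ez {1}[u2]mx11_scalar mul_scalar_mx.
  have ezx := V'K z zV'.
  rewrite ez' fmDr fmZr V'K ?add0r in ezx; last exact: submx_trans z1s (capmxSr _ _).
  move/eqP: ezx; rewrite mulf_eq0 (negbTE nx) orbF => /eqP u0.
  rewrite ez' u0 scale0r addr0.
  exact: submx_trans z1s (capmxSl _ _).
have [b' [Eb' Mb' Ob' Nb']] := IH V' rV' nd' sp'.
case/andP: Mb' => Mb1 Mb2.
have b'V' : forall j, (b' j <= V')%MS.
  by move=> j; have := row_sub j (\matrix_(i < k) b' i); rewrite rowK => H;
     exact: submx_trans H Mb1.
pose b (i : 'I_k.+1) := if unlift ord0 i is Some j then b' j else x.
have bM : forall i, (b i <= \matrix_(i < k.+1) b i)%MS.
  by move=> i; rewrite -{1}(rowK b i) row_sub.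
exists b; split.
- by move=> i; rewrite /b; case: (unliftP ord0 i) => [j|] _.
- apply/andP; split.
    apply/row_subP => i; rewrite rowK /b; case: (unliftP ord0 i) => [j|] _ //.
    exact: submx_trans (b'V' j) V'V.
  apply: submx_trans (decomp_sub xV nx) _; rewrite addsmx_sub; apply/andP; split.
    apply: submx_trans Mb2 _; apply/row_subP => j; rewrite rowK.
    have -> : b' j = b (lift ord0 j) by rewrite /b liftK.
    exact: bM.
  have -> : x = b ord0 by rewrite /b unlift_none.
  exact: bM.
- move=> i j; rewrite /b.
  case: (unliftP ord0 i) => [i' ->|->]; case: (unliftP ord0 j) => [j' ->|->] //=.
  + by rewrite (inj_eq (@lift_inj _ ord0)) => /Ob'.
  + by move=> _; rewrite (fm_sym x (b' i') HT) V'K // conjC0.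
  + by move=> _; rewrite V'K.
- by move=> i; rewrite /b; case: (unliftP ord0 i) => [j|] _.
Qed.

End Main.

Section Decomp.
Variable C : numClosedFieldType.
Variable N : nat.
Local Notation n := (N + N)%N.
Local Notation cj A := (map_mx Num.Def.conjC A).
Local Notation tz := (tauz C N).
Implicit Types x y z : 'rV[C]_n.
Let HT := Hmtz C N.

Lemma HmN (M : 'M[C]_n) : Hm M -> Hm (- M).
Proof. by rewrite /Hm map_mxN linearN /= => ->. Qed.

Lemma addsP x (P : 'M[C]_n) w : (w <= x + P)%MS ->
  exists d p, (p <= P)%MS /\ w = d *: x + p.
Proof.
case/sub_addsmxP => -[u1 u2] /= ->; exists (u1 0 0), (u2 *m P); split.
  exact: submxMl.
by rewrite {1}[u1]mx11_scalar mul_scalar_mx.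
Qed.

Definition posd (M : 'M[C]_n) (P : 'M[C]_n) :=
  forall w, (w <= P)%MS -> w != 0 -> 0 < fm M w w.

Lemma posd_add (M : 'M[C]_n) x (P : 'M[C]_n) : Hm M -> 0 < fm M x x -> posd M P ->
  (forall p, (p <= P)%MS -> fm M x p = 0) -> posd M (x + P)%MS.
Proof.
move=> HM Nx HP Hx w /addsP [d [p [pP ->]]] nw.
have e1 := Hx p pP.
have e2 : fm M p x = 0 by rewrite (fm_sym x p HM) e1 conjC0.
rewrite !fmDl !fmDr !fmZl !fmZr e1 e2 !mulr0 !addr0 add0r mulrA.
have dd : 0 <= d^* * d by rewrite mulrC mul_conjC_ge0.
case: (eqVneq p 0) => [p0|np].
  rewrite p0 fm0l addr0; apply: mulr_gt0 => //.
  rewrite mulrC mul_conjC_gt0; apply/eqP => d0.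
  by move: nw; rewrite p0 d0 scale0r addr0 eqxx.
by apply: ltr_wpDl; [apply: mulr_ge0 => //; apply: ltW | apply: HP].
Qed.

Definition eigrel (V : 'M[C]_n) x mu :=
  forall y, (y <= V)%MS -> fm tz x y = mu * fm 1%:M x y.

Lemma GEV (V : 'M[C]_n) : V != 0 ->
  exists x, [/\ (x <= V)%MS, x != 0 & exists mu, eigrel V x mu].
Proof.
move=> nV.
set B := row_base V.
have fmB : forall M (c d : 'rV[C]_(\rank V)),
    fm M (c *m B) (d *m B) = (cj c *m (cj B *m M *m B^T) *m d^T) 0 0.
  by move=> M c d; rewrite /fm map_mxM trmx_mul !mulmxA.
set G := cj B *m 1%:M *m B^T.
set A := cj B *m tz *m B^T.
have Gu : G \in unitmx.
  apply: free_of_inj => u uG.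
  have : fm 1%:M (cj u *m B) (cj u *m B) = 0.
    by rewrite fmB map_mxCK -/G uG mul0mx mxE.
  move/fm1_eq0/eqP; rewrite mulmx_free_eq0 ?row_base_free // map_mx_eq0.
  by move/eqP.
set T := A *m invmx G.
have rpos : (0 < \rank V)%N by rewrite lt0n mxrank_eq0.
have [mu] : exists mu, root (char_poly T) mu.
  by apply/closed_rootP; rewrite size_char_poly; case: (\rank V) rpos.
rewrite -eigenvalue_root_char => /eigenvalueP [v Hv nv].
exists (cj v *m B); split.
- by rewrite -(eq_row_base V) submxMl.
- by rewrite mulmx_free_eq0 ?row_base_free // map_mx_eq0.
exists mu => y; rewrite -(eq_row_base V) => /submxP [d ->].
rewrite !fmB map_mxCK -/G -/A.
have -> : A = T *m G by rewrite /T mulmxKV.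
by rewrite mulmxA Hv -!scalemxAl mxE.
Qed.

End Decomp.

Section Decomp2.
Variable C : numClosedFieldType.
Variable N : nat.
Local Notation n := (N + N)%N.
Local Notation cj A := (map_mx Num.Def.conjC A).
Local Notation tz := (tauz C N).
Implicit Types x y z : 'rV[C]_n.
Let HT := Hmtz C N.
Let H1 := Hm1 C N.

Lemma L k : forall V : 'M[C]_n, \rank V = k ->
  (forall x, (x <= V)%MS -> (forall y, (y <= V)%MS -> fm tz x y = 0) -> x = 0) ->
  exists P Q : 'M[C]_n, [/\ (P + Q == V)%MS, posd tz P, posd (- tz) Q
    & (forall wp wm, (wp <= P)%MS -> (wm <= Q)%MS -> fm tz wp wm = 0 /\ fm 1%:M wp wm = 0)] /\
    ((forall U : 'M[C]_n, (forall x mu, (x <= V)%MS -> 0 < mu -> eigrel V x mu ->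
        (x <= U)%MS) -> (P <= U)%MS)
  /\ (forall U : 'M[C]_n, (forall x mu, (x <= V)%MS -> mu < 0 -> eigrel V x mu ->
        (x <= U)%MS) -> (Q <= U)%MS)).
Proof.
elim: k => [|k IH] V rV nd.
  have V0 : V = 0 by apply/eqP; rewrite -mxrank_eq0 rV.
  exists 0, 0; split; [split|split].
  - by apply/andP; split; [rewrite addsmx_sub !sub0mx | rewrite V0 sub0mx].
  - by move=> w; rewrite submx0 => /eqP ->; rewrite eqxx.
  - by move=> w; rewrite submx0 => /eqP ->; rewrite eqxx.
  - by move=> wp wm; rewrite !submx0 => /eqP -> /eqP ->; rewrite !fm0l.
  - by move=> U _; rewrite sub0mx.
  - by move=> U _; rewrite sub0mx.
have nV : V != 0 by rewrite -mxrank_eq0 rV.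
have [x [xV nx [mu Hmu]]] := GEV nV.
have Sx := fm1_gt0 nx.
have nx1 : fm 1%:M x x != 0 by rewrite gt_eqF.
have NxE : fm tz x x = mu * fm 1%:M x x := Hmu x xV.
set V' := (V :&: kerM 1%:M x)%MS.
have rV' : \rank V' = k by have := decomp_rank xV nx1; rewrite rV => -[].
have V'V : (V' <= V)%MS := capmxSl _ _.
have K1 : forall z, (z <= V')%MS -> fm 1%:M x z = 0.
  move=> z zV'; apply/eqP; rewrite -fm_ker; exact: submx_trans zV' (capmxSr _ _).
have Kt : forall z, (z <= V')%MS -> fm tz x z = 0.
  by move=> z zV'; rewrite Hmu ?K1 ?mulr0 // (submx_trans zV' V'V).
have K1' : forall z, (z <= V')%MS -> fm 1%:M z x = 0.
  by move=> z zV'; rewrite (fm_sym x z H1) K1 ?conjC0.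
have Kt' : forall z, (z <= V')%MS -> fm tz z x = 0.
  by move=> z zV'; rewrite (fm_sym x z HT) Kt ?conjC0.
have nd' : forall z, (z <= V')%MS -> (forall y, (y <= V')%MS -> fm tz z y = 0) -> z = 0.
  move=> z zV' Hz; apply: nd; first exact: submx_trans zV' V'V.
  by move=> y yV; have := Hz _ (decomp_in xV nx1 yV); rewrite fmBr fmZr Kt' // mulr0 subr0.
have lift : forall x' mu', (x' <= V')%MS -> eigrel V' x' mu' -> eigrel V x' mu'.
  move=> x' mu' x'V' H y yV.
  have := H _ (decomp_in xV nx1 yV).
  by rewrite !fmBr !fmZr (Kt' x') // (K1' x') // !mulr0 !subr0.
have mureal : mu \is Num.real.
  have -> : mu = fm tz x x / fm 1%:M x x by rewrite NxE mulfK.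
  by rewrite realM ?fm_real // realV fm_real.
have mu0 : mu != 0.
  apply/eqP => mu0; move: nx; rewrite (nd x xV) ?eqxx // => y yV.
  by rewrite Hmu // mu0 mul0r.
have [P1 [Q1 [[PQ1 pP1 pQ1 bo1] [sP1 sQ1]]]] := IH V' rV' nd'.
case/andP: PQ1 => PQV' V'PQ.
move: (PQV'); rewrite addsmx_sub => /andP [P1V' Q1V'].
have P1V := submx_trans P1V' V'V.
have Q1V := submx_trans Q1V' V'V.
case: (real_ltgtP mureal (real0 _)) => [mun|mup|e]; last by rewrite e eqxx in mu0.
- exists P1, (x + Q1)%MS; split; [split|split].
  + apply/andP; split.
      by rewrite addsmx_sub P1V addsmx_sub xV Q1V.
    apply: submx_trans (decomp_sub xV nx1) _; rewrite addsmx_sub; apply/andP; split.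
      by apply: submx_trans V'PQ _; apply: addsmxS => //; apply: addsmxSr.
    exact: submx_trans (addsmxSl x Q1) (addsmxSr _ _).
  + exact: pP1.
  + apply: posd_add => //; first exact: HmN.
      by rewrite fmNM oppr_gt0 NxE pmulr_llt0.
    by move=> q qQ; rewrite fmNM Kt ?oppr0 // (submx_trans qQ Q1V').
  + move=> wp wm wpP /addsP [d [q [qQ ->]]].
    have wpV' := submx_trans wpP P1V'.
    have [b1 b2] := bo1 _ _ wpP qQ.
    by rewrite !fmDr !fmZr Kt' // K1' // b1 b2 !mulr0 !addr0.
  + move=> U HU; apply: sP1 => x' mu' x'V' mup' H.
    by apply: (HU x' mu') => //; [exact: submx_trans x'V' V'V | exact: lift].
  + move=> U HU; rewrite addsmx_sub; apply/andP; split; first exact: (HU x mu).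
    apply: sQ1 => x' mu' x'V' mup' H.
    by apply: (HU x' mu') => //; [exact: submx_trans x'V' V'V | exact: lift].
- exists (x + P1)%MS, Q1; split; [split|split].
  + apply/andP; split.
      by rewrite addsmx_sub addsmx_sub xV P1V Q1V.
    apply: submx_trans (decomp_sub xV nx1) _; rewrite addsmx_sub; apply/andP; split.
      by apply: submx_trans V'PQ _; apply: addsmxS => //; apply: addsmxSr.
    exact: submx_trans (addsmxSl x P1) (addsmxSl _ _).
  + apply: posd_add => //.
      by rewrite NxE mulr_gt0.
    by move=> q qQ; rewrite Kt // (submx_trans qQ P1V').
  + exact: pQ1.
  + move=> wp wm /addsP [d [p [pP ->]]] wmQ.
    have wmV' := submx_trans wmQ Q1V'.
    have [b1 b2] := bo1 _ _ pP wmQ.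
    by rewrite !fmDl !fmZl Kt // K1 // b1 b2 !mulr0 !addr0.
  + move=> U HU; rewrite addsmx_sub; apply/andP; split; first exact: (HU x mu).
    apply: sP1 => x' mu' x'V' mup' H.
    by apply: (HU x' mu') => //; [exact: submx_trans x'V' V'V | exact: lift].
  + move=> U HU; apply: sQ1 => x' mu' x'V' mup' H.
    by apply: (HU x' mu') => //; [exact: submx_trans x'V' V'V | exact: lift].
Qed.

End Decomp2.

Lemma psd_rows (C : numClosedFieldType) (N : nat) (M : 'M[C]_(N + N)) m
    (b : 'I_m -> 'rV[C]_(N + N)) (S : {set 'I_m}) :
  (forall i j, i != j -> fm M (b i) (b j) = 0) ->
  (forall i, i \in S -> 0 < fm M (b i) (b i)) ->
  forall w, (w <= \matrix_(k < #|S|) b (enum_val k))%MS -> 0 <= fm M w w.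
Proof.
move=> Ho Hp w /submxP [u ->]; rewrite mulmx_sum_row fm_suml.
apply: sumr_ge0 => k _; rewrite fm_sumr (bigD1 k) //= big1 ?addr0.
  rewrite rowK fmZl fmZr mulrA; apply: mulr_ge0.
    by rewrite mulrC mul_conjC_ge0.
  by apply: ltW; apply: Hp; apply: enum_valP.
move=> l nlk; rewrite !rowK fmZl fmZr Ho ?mulr0 //.
by rewrite (inj_eq enum_val_inj) eq_sym.
Qed.

Unset Implicit Arguments.
Theorem claim1 (C : numClosedFieldType) (N : nat) (h : 'M[C]_(N + N))
  (w0 : C) (W : 'M[C]_(N + N)) :
  hermitian_mx h ->
  diagonalizable (tauz C N *m h) ->
  (forall a, eigenvalue (tauz C N *m h) a -> a \is Num.real) ->
  0 < w0 ->
  ~~ eigenvalue (tauz C N *m h) w0 -> ~~ eigenvalue (tauz C N *m h) (- w0) ->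
  is_span_of (fun v => exists2 w, w0 < w & eigvec (tauz C N *m h) w v) W ->
  (exists b : 'I_(\rank W) -> 'rV[C]_(N + N),
      good_eigenbasis (tauz C N *m h) w0 W b) /\
  (forall b : 'I_(\rank W) -> 'rV[C]_(N + N),
      good_eigenbasis (tauz C N *m h) w0 W b ->
      let Rp := #|[set i | 0 < sympl (b i) (b i)]| in
      let Rm := #|[set i | sympl (b i) (b i) < 0]| in
      (Rp + Rm = \rank W)%N /\
      exists Wpp Wpm : 'M[C]_(N + N),
        good_decomp W Wpp Wpm Rp Rm /\
        forall Wpp' Wpm' : 'M[C]_(N + N), good_decomp W Wpp' Wpm' Rp Rm ->
          (Wpp' == Wpp)%MS /\ (Wpm' == Wpm)%MS).
Proof.
move=> hHerm Ddiag Dreal w0pos _ _ span.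
set D := tauz C N *m h.
have HT := Hmtz C N.
have hH : Hm h by rewrite /Hm; apply/matrixP => i j; rewrite !mxE hHerm conjCK.
have hD : tauz C N *m D = h by rewrite /D mulmxA tauz2 mul1mx.
have nd := ND hH hD (w0 := w0) (W := W) Ddiag Dreal span.
split.
  have sp : forall U : 'M[C]_(N + N),
      (forall v, (v <= W)%MS -> Eig D w0 v -> (v <= U)%MS) -> (W <= U)%MS.
    by move=> U HU; apply: span.2 => v Ev; apply: HU => //; apply: span.1.
  have [b [Eb Mb Ob Nb]] := EB hH hD w0pos (erefl (\rank W)) nd sp.
  exists b; split => //.
    by move=> i j nij; rewrite symplE; apply: Ob.
  by move=> i; rewrite symplE.
move=> b [Eb Mb Ob Nb] Rp Rm.
have Ob' : forall i j, i != j -> fm (tauz C N) (b i) (b j) = 0.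
  by move=> i j nij; rewrite -symplE; apply: Ob.
have Nb' : forall i, fm (tauz C N) (b i) (b i) != 0 by move=> i; rewrite -symplE.
set S := [set i | 0 < sympl (b i) (b i)].
set Sm := [set i | sympl (b i) (b i) < 0].
have Sm_eq : Sm = ~: S.
  apply/setP => i; rewrite !inE symplE.
  case: (real_ltgtP (fm_real (b i) HT) (real0 _)) => //.
  by move=> e; move: (Nb' i); rewrite e eqxx.
have RpRm : (Rp + Rm = \rank W)%N by rewrite /Rp /Rm -/S -/Sm Sm_eq cardsC card_ord.
split => //.
have [P [Q [[PQ pP pQ bo] [sP sQ]]]] := L (erefl (\rank W)) nd.
case/andP: Mb => Mb1 Mb2.
have bW : forall i, (b i <= W)%MS.
  by move=> i; rewrite -(rowK b i); apply: submx_trans (row_sub _ _) Mb1.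
case/andP: (PQ) => PQW WPQ.
move: (PQW); rewrite addsmx_sub => /andP [PW QW].
set Bp := \matrix_(k < #|S|) b (enum_val k).
set Bm := \matrix_(k < #|Sm|) b (enum_val k).
have psdP : forall w, (w <= Bp)%MS -> 0 <= fm (tauz C N) w w.
  apply: psd_rows => // i; rewrite inE symplE //.
have nsdM : forall w, (w <= Bm)%MS -> fm (tauz C N) w w <= 0.
  move=> w wB; rewrite -oppr_ge0 -fmNM; apply: (psd_rows (S := Sm)) wB.
    by move=> i j nij; rewrite fmNM Ob' ?oppr0.
  by move=> i; rewrite inE symplE fmNM oppr_gt0.
have BpW : (Bp <= W)%MS by apply/row_subP => k; rewrite rowK.
have BmW : (Bm <= W)%MS by apply/row_subP => k; rewrite rowK.
have WB : (W <= Bp + Bm)%MS.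
  apply: submx_trans Mb2 _; apply/row_subP => i; rewrite rowK.
  case: (boolP (i \in S)) => iS.
    apply: submx_trans (addsmxSl _ _).
    by rewrite -(enum_rankK_in iS iS) -(rowK (fun k => b (enum_val k))) row_sub.
  have iSm : i \in Sm by rewrite Sm_eq inE.
  apply: submx_trans (addsmxSr _ _).
  by rewrite -(enum_rankK_in iSm iSm) -(rowK (fun k => b (enum_val k))) row_sub.
have PQ0 : (P :&: Q = 0)%MS.
  apply: cap0 => z zP zQ; apply/eqP; case: (eqVneq z 0) => // nz.
  have := pP z zP nz; have := pQ z zQ nz; rewrite fmNM oppr_gt0 => h1 h2.
  by have := lt_trans h1 h2; rewrite ltxx.
have PB0 : (P :&: Bm = 0)%MS.
  apply: cap0 => z zP zB; apply/eqP; case: (eqVneq z 0) => // nz.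
  have := pP z zP nz; have := nsdM z zB => h1 h2.
  by have := le_lt_trans h1 h2; rewrite ltxx.
have QB0 : (Q :&: Bp = 0)%MS.
  apply: cap0 => z zQ zB; apply/eqP; case: (eqVneq z 0) => // nz.
  have := pQ z zQ nz; have := psdP z zB; rewrite fmNM oppr_gt0 => h1 h2.
  by have := lt_le_trans h2 h1; rewrite ltxx.
have r1 : (\rank P + \rank Q = \rank W)%N.
  by rewrite -mxrank_disjoint_sum // (eqmx_rank PQ).
have r2 : (\rank P + \rank Bm <= \rank W)%N.
  by rewrite -mxrank_disjoint_sum // mxrankS // addsmx_sub PW BmW.
have r3 : (\rank Q + \rank Bp <= \rank W)%N.
  by rewrite -mxrank_disjoint_sum // mxrankS // addsmx_sub QW BpW.
have r4 : (\rank W <= \rank Bp + \rank Bm)%N.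
  exact: leq_trans (mxrankS WB) (mxrank_adds_leqif _ _).1.
have r5 : (\rank Bp <= #|S|)%N := rank_leq_row _.
have r6 : (\rank Bm <= #|Sm|)%N := rank_leq_row _.
have eRp : Rp = #|S| by [].
have eRm : Rm = #|Sm| by [].
have rP : \rank P = Rp by lia.
have rQ : \rank Q = Rm by lia.
exists P, Q; split.
  split; split => //.
  - by apply/mxdirect_addsP.
  - by move=> w wP nw; rewrite symplE; apply: pP.
  - by move=> w wQ nw; rewrite symplE -oppr_gt0 -fmNM; apply: pQ.
  - by move=> wp wm wpP wmQ _ _; rewrite symplE hipE; apply: bo.
move=> P' Q' [[PQ' _ rP' rQ'] [pP' nQ' bo']].
have bo'' : forall a q, (a <= P')%MS -> (q <= Q')%MS ->
    fm (tauz C N) a q = 0 /\ fm 1%:M a q = 0.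
  move=> a q aP qQ.
  case: (eqVneq a 0) => [->|na]; first by rewrite !fm0l.
  case: (eqVneq q 0) => [->|nq]; first by rewrite !fm0r.
  by have [] := bo' a q aP qQ na nq; rewrite symplE hipE.
case/andP: PQ' => PQW' WPQ'.
move: (PQW'); rewrite addsmx_sub => /andP [P'W Q'W].
have PP' : (P <= P')%MS.
  apply: sP => x mu xW mup Hx.
  case/sub_addsmxP: (submx_trans xW WPQ') => -[u1 u2] /= ex.
  set a := u1 *m P' in ex; set q := u2 *m Q' in ex.
  have aP : (a <= P')%MS := submxMl _ _.
  have qQ : (q <= Q')%MS := submxMl _ _.
  have := Hx q (submx_trans qQ Q'W).
  rewrite ex !fmDl (bo'' a q aP qQ).1 (bo'' a q aP qQ).2 !add0r.
  case: (eqVneq q 0) => [q0 _|nq]; first by rewrite q0 addr0.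
  move=> e; have := nQ' q qQ nq; rewrite symplE e.
  by rewrite pmulr_rlt0 // => /(lt_trans (fm1_gt0 nq)); rewrite ltxx.
have QQ' : (Q <= Q')%MS.
  apply: sQ => x mu xW mun Hx.
  case/sub_addsmxP: (submx_trans xW WPQ') => -[u1 u2] /= ex.
  set a := u1 *m P' in ex; set q := u2 *m Q' in ex.
  have aP : (a <= P')%MS := submxMl _ _.
  have qQ : (q <= Q')%MS := submxMl _ _.
  have := Hx a (submx_trans aP P'W).
  have e1 : fm (tauz C N) q a = 0.
    by rewrite (fm_sym a q HT) (bo'' a q aP qQ).1 conjC0.
  have e2 : fm 1%:M q a = 0.
    by rewrite (fm_sym a q (Hm1 C N)) (bo'' a q aP qQ).2 conjC0.
  rewrite ex !fmDl e1 e2 !addr0.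
  case: (eqVneq a 0) => [a0 _|na]; first by rewrite a0 add0r.
  move=> e; have := pP' a aP na; rewrite symplE e.
  by rewrite nmulr_rgt0 // => /(lt_trans (fm1_gt0 na)); rewrite ltxx.
split; apply/andP; split => //.
  by rewrite -(mxrank_leqif_sup PP').2 rP rP'.
by rewrite -(mxrank_leqif_sup QQ').2 rQ rQ'.
Qed.
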